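(* Let $\gamma>0$, $\lambda>0$ and $\omega\in[-\pi,\pi]$, and let $f$ be the $\mathrm{GCPC}(\omega,\gamma,\lambda)$ density on the circle. - (i) If $\lambda=1$, then $f$ is unimodal. - (A) If $1<\lambda\le\gamma^2+1$, then $f$ is unimodal. - (B) If $\lambda>\gamma^2+1$, then $f$ is unimodal when $(\gamma^2+1)(\lambda-1)>(\lambda-\gamma^2-1)(2\lambda-1)^2$. - (C) If $\tfrac12<\lambda<1$, then $f$ is unimodal when $(\gamma^2+1-\lambda)(1-2\lambda)^2>(\gamma^2+1)(1-\lambda)$. - (D) If $\lambda\le\tfrac12$, then $f$ is never unimodal (it has more than one local maximum).
   Context: For $\lambda>0$, $\gamma\ge0$ and $\omega\in[-\pi,\pi]$, the distribution $\mathrm{GCPC}(\omega,\gamma,\lambda)$ is the distribution on the circle with density $$f(\theta)=\frac{1}{2\pi\sqrt{\lambda}\,\bigl(b\sqrt{\gamma^2+1}-\gamma\cos\phi\,\sqrt{b}\bigr)},\qquad \phi=\theta-\omega,\quad b=\cos^2\phi+\frac{\sin^2\phi}{\lambda}.$$ A density on the circle is called unimodal if it has exactly one local maximum on the circle. The density is viewed as a $2\pi$-periodic function of $\theta$. *)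

(* Defs.v *)
From Stdlib Require Import Reals Lra.
Open Scope R_scope.

Definition gcpc_density (omega gamma lambda theta : R) : R :=
  let phi := theta - omega in
  let b := cos phi ^ 2 + sin phi ^ 2 / lambda in
  1 / (2 * PI * sqrt lambda *
       (b * sqrt (gamma ^ 2 + 1) - gamma * cos phi * sqrt b)).

Definition is_local_max (f : R -> R) (t : R) : Prop :=
  exists d, 0 < d /\ forall x, Rabs (x - t) < d -> f x <= f t.

(* Points of the circle are represented by their angle in [0, 2*PI). *)
Definition on_circle (t : R) : Prop := 0 <= t < 2 * PI.

Definition unimodal_circ (f : R -> R) : Prop :=
  exists t, on_circle t /\ is_local_max f t /\
    forall s, on_circle s -> is_local_max f s -> s = t.

(* Main.v *)
Require Import Defs.
From Stdlib Require Import Reals Lra Psatz.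
From Coquelicot Require Import Coquelicot.
Open Scope R_scope.

Definition bb (l c : R) := c ^ 2 + (1 - c ^ 2) / l.
Definition DD (g l c : R) := bb l c * sqrt (g ^ 2 + 1) - g * c * sqrt (bb l c).
Definition FF (g l c : R) := 1 / (2 * PI * sqrt l * DD g l c).
Definition Dd (g l c : R) :=
  2 * sqrt (g ^ 2 + 1) * (1 - 1 / l) * c - g * (1 / l + 2 * (1 - 1 / l) * c ^ 2) / sqrt (bb l c).

Lemma f_eq g l w th : gcpc_density w g l th = FF g l (cos (th - w)).
Proof.
  unfold gcpc_density, FF, DD, bb. cbv zeta.
  replace (sin (th - w) ^ 2) with (1 - cos (th - w) ^ 2). reflexivity.
  pose proof (sin2_cos2 (th - w)). unfold Rsqr in H. lra.
Qed.

Lemma bb_pos l c : 0 < l -> -1 <= c <= 1 -> 0 < bb l c.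
Proof.
  intros hl hc. unfold bb.
  assert (h : c ^ 2 + (1 - c ^ 2) / l = (1 + (l - 1) * c ^ 2) / l) by (field; lra).
  rewrite h. apply Rdiv_lt_0_compat; [|lra].
  assert (0 <= c ^ 2 <= 1) by nra.
  destruct (Rle_dec 1 l); nra.
Qed.

Lemma bb_ge l c : 0 < l -> l <= 1 -> -1 <= c <= 1 -> c ^ 2 <= bb l c.
Proof.
  intros hl hl1 hc. unfold bb.
  assert (0 <= (1 - c ^ 2) / l). { apply Rdiv_le_0_compat; nra. } lra.
Qed.

Lemma G_facts g : 0 < g -> 0 < sqrt (g ^ 2 + 1) /\ sqrt (g^2+1) * sqrt (g^2+1) = g^2 + 1
  /\ g < sqrt (g ^ 2 + 1).
Proof.
  intros hg. assert (h0 : 0 < g^2+1) by nra.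
  pose proof (sqrt_lt_R0 _ h0). pose proof (sqrt_sqrt (g^2+1) (Rlt_le _ _ h0)).
  split; [lra|split;[lra|]]. nra.
Qed.

Lemma DD_pos g l c : 0 < g -> 0 < l -> -1 <= c <= 1 -> 0 < DD g l c.
Proof.
  intros hg hl hc. unfold DD.
  pose proof (bb_pos l c hl hc) as hb.
  destruct (G_facts g hg) as [hG0 [hG2 hGg]].
  set (G := sqrt (g^2+1)) in *.
  pose proof (sqrt_lt_R0 _ hb). pose proof (sqrt_sqrt _ (Rlt_le _ _ hb)).
  set (s := sqrt (bb l c)) in *. set (b := bb l c) in *.
  assert (hbc : c ^ 2 <= b \/ 0 < b - c^2).
  { unfold b, bb. assert (0 <= (1 - c ^ 2) / l). { apply Rdiv_le_0_compat; nra. } lra. }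
  assert (hk : g * c < G * s).
  { destruct (Rle_dec c 0) as [|n]. nra. apply Rnot_le_lt in n.
    assert ((g*c)^2 < (G*s)^2).
    { replace ((G*s)^2) with ((g^2+1)*b) by (rewrite <- hG2, <- H0; ring).
      unfold b, bb. assert (0 <= (1 - c ^ 2) / l). { apply Rdiv_le_0_compat; nra. }
      nra. }
    assert (0 < G*s) by (apply Rmult_lt_0_compat; lra). clear hbc. destruct (Rle_dec (G*s) (g*c)); [|lra]. nra. }
  replace (b * G - g * c * s) with (s * (G * s - g * c)) by (rewrite <- H0; ring).
  nra.
Qed.
Lemma D_deriv g l c : 0 < g -> 0 < l -> -1 <= c <= 1 -> derivable_pt_lim (DD g l) c (Dd g l c).
Proof.
  intros hg hl hc. apply is_derive_Reals.
  pose proof (bb_pos l c hl hc) as hb.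
  unfold DD, Dd. unfold bb in *.
  auto_derive.
  - lra.
  - replace (c * (c*1) + (1 + - (c*(c*1))) * / l) with (c^2 + (1-c^2)/l) by (field; lra).
    replace (g * (g*1) + 1) with (g^2+1) by ring.
    pose proof (sqrt_lt_R0 _ hb). pose proof (sqrt_sqrt _ (Rlt_le _ _ hb)).
    set (s := sqrt (c ^ 2 + (1 - c ^ 2) / l)) in *.
    replace (g * 1 * s) with (g * (s*s)/s) by (field; lra). rewrite H0.
    field. lra.
Qed.

Lemma D_decr g l a b : 0 < g -> 0 < l -> -1 <= a -> a < b -> b <= 1 ->
  (forall c, a <= c <= b -> Dd g l c < 0) -> DD g l b < DD g l a.
Proof.
  intros hg hl ha hab hb hd.
  destruct (MVT_cor2 (DD g l) (Dd g l) a b hab) as [c [e hc]].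
  { intros c hc. apply D_deriv; lra. }
  assert (Dd g l c < 0) by (apply hd; lra). nra.
Qed.

Lemma D_incr g l a b : 0 < g -> 0 < l -> -1 <= a -> a < b -> b <= 1 ->
  (forall c, a <= c <= b -> 0 < Dd g l c) -> DD g l a < DD g l b.
Proof.
  intros hg hl ha hab hb hd.
  destruct (MVT_cor2 (DD g l) (Dd g l) a b hab) as [c [e hc]].
  { intros c hc. apply D_deriv; lra. }
  assert (0 < Dd g l c) by (apply hd; lra). nra.
Qed.

Lemma Dd_eq g l c : 0 < l -> -1 <= c <= 1 ->
  Dd g l c = (2 * sqrt (g^2+1) * (l-1) * c * sqrt (bb l c) - g * (1 + 2*(l-1)*c^2))
             / (l * sqrt (bb l c)).
Proof.
  intros hl hc. pose proof (sqrt_lt_R0 _ (bb_pos l c hl hc)).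
  unfold Dd. field. lra.
Qed.

Lemma num_facts g l c : 0 < g -> 0 < l -> -1 <= c <= 1 ->
  let G := sqrt (g^2+1) in let s := sqrt (bb l c) in
  0 < G /\ G * G = g^2+1 /\ g < G /\ 0 < s /\ l * (s * s) = 1 + (l-1)*c^2.
Proof.
  intros hg hl hc G s.
  destruct (G_facts g hg) as [h1 [h2 h3]].
  pose proof (bb_pos l c hl hc) as hb.
  pose proof (sqrt_lt_R0 _ hb). pose proof (sqrt_sqrt _ (Rlt_le _ _ hb)).
  fold s in H, H0. repeat split; try assumption.
  rewrite H0. unfold bb. field. lra.
Qed.

Lemma Dd_neg_uni g l c : 0 < g -> 1/2 < l -> 0 < g^2 + 4*(g^2+1-l)*(l-1) ->
  -1 <= c <= 1 -> Dd g l c < 0.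
Proof.
  intros hg hl hQ hc. rewrite Dd_eq by lra.
  destruct (num_facts g l c hg ltac:(lra) hc) as [hG0 [hG2 [hGg [hs hls]]]].
  set (G := sqrt (g^2+1)) in *. set (s := sqrt (bb l c)) in *.
  assert (hpos : 0 < / (l * s)) by (apply Rinv_0_lt_compat; nra).
  unfold Rdiv. apply (Rmult_lt_reg_r (l * s)); [nra|].
  rewrite Rmult_assoc, Rinv_l by nra. rewrite Rmult_0_l, Rmult_1_r.
  clear hpos. clearbody G s.
  set (m := l - 1) in *.
  assert (hmd : m = l - 1) by reflexivity. clearbody m.
  assert (hy : 0 <= c^2 <= 1) by nra.
  assert (h1 : 0 < 1 + 2*m*c^2) by (destruct (Rle_dec 0 (l-1)); nra).
  destruct (Rle_dec (m*c) 0) as [hmc|hmc].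
  { assert (2*G*m*c*s = 2*G*s*(m*c)) by ring. assert (0 <= G*s) by nra.
    nra. }
  apply Rnot_le_lt in hmc.
  set (y := c^2) in hy. assert (hyd : y = c^2) by reflexivity. clearbody y.
  set (E := g^2+1-l). assert (hEd : E = g^2+1-l) by reflexivity. clearbody E.
  assert (hR : 0 < l*g^2 + 4*E*m*y*(1+m*y)).
  { destruct (Rle_dec 0 (E*m*y*(1+m*y))) as [hT|hT]. nra.
    apply Rnot_le_lt in hT.
    assert (hd : E*m*y*(1+m*y) - E*m*(1+m) = E*(m*(y-1)*(1+m*(y+1)))) by ring.
    assert (E*(m*(y-1)*(1+m*(y+1))) >= 0).
    { destruct (Rle_dec 0 m) as [hm|hm].
      - assert (hE : E <= 0).
        { destruct (Rle_dec E 0); [assumption|].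
          assert (0 <= E*m*y*(1+m*y)).
          { assert (0 <= m*y) by nra. assert (0 <= E*(m*y)) by nra. nra. }
          lra. }
        assert (m*(y-1)*(1+m*(y+1)) <= 0).
        { assert (0 < 1+m*(y+1)) by nra. assert (m*(y-1) <= 0) by nra. nra. }
        nra.
      - apply Rnot_le_lt in hm. assert (hE : 0 < E) by nra.
        assert (0 <= m*(y-1)*(1+m*(y+1))).
        { assert (0 < 1+m*(y+1)) by nra. assert (0 <= m*(y-1)) by nra. nra. }
        nra. }
    assert (m*(1+m) = m*l) by (subst m; ring).
    subst E. nra. }
  assert (hsq : (2*G*m*c*s)^2 * l < (g*(1+2*m*c^2))^2 * l).
  { replace ((2*G*m*c*s)^2 * l) with (4*(G*G)*m^2*c^2*(l*(s*s))) by ring.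
    rewrite hG2, hls. rewrite <- hyd. subst E.
    replace ((g*(1+2*m*y))^2*l) with (l*g^2*(1+2*m*y)^2) by ring.
    subst m. nra. }
  assert (hsq' : (2*G*m*c*s)^2 < (g*(1+2*m*c^2))^2).
  { apply (Rmult_lt_reg_r l); lra. }
  assert (0 < g*(1+2*m*c^2)) by nra.
  destruct (Rle_dec (g*(1+2*m*c^2)) (2*G*m*c*s)); [|lra]. nra.
Qed.

Lemma Dd_neg_D g l c : 0 < g -> 0 < l -> l <= 1/2 -> 0 <= c <= 1 -> Dd g l c < 0.
Proof.
  intros hg hl hl2 hc. rewrite Dd_eq by lra.
  destruct (num_facts g l c hg hl ltac:(lra)) as [hG0 [hG2 [hGg [hs hls]]]].
  set (G := sqrt (g^2+1)) in *. set (s := sqrt (bb l c)) in *. clearbody G s.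
  assert (hsc : c <= s).
  { assert (hq : l*(s*s-c*c) = 1 - c^2) by (rewrite Rmult_minus_distr_l, hls; ring).
    assert (c*c <= s*s). { destruct (Rle_dec (c*c) (s*s)); [assumption|]. nra. } destruct (Rle_dec c s); [assumption|]. nra. }
  assert (hN : 2 * G * (l-1) * c * s - g * (1 + 2*(l-1)*c^2) < 0).
  { assert (0 <= c*(s-c)) by (apply Rmult_le_pos; lra). assert (0 <= (1-l)*(c*(s-c))) by (apply Rmult_le_pos; lra). assert (0 <= (1-l)*(G-g)*c^2) by (apply Rmult_le_pos; [apply Rmult_le_pos|]; nra). nra. }
  assert (0 < l*s) by nra.
  apply Rdiv_neg_pos; assumption.
Qed.

Lemma Dd_pos_D g l c : 0 < g -> 0 < l -> l <= 1/2 -> -1 <= c <= -3/4 -> 0 < Dd g l c.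
Proof.
  intros hg hl hl2 hc. rewrite Dd_eq by lra.
  destruct (num_facts g l c hg hl ltac:(lra)) as [hG0 [hG2 [hGg [hs hls]]]].
  set (G := sqrt (g^2+1)) in *. set (s := sqrt (bb l c)) in *. clearbody G s.
  assert (hsc : -c <= s).
  { assert (hq : l*(s*s-c*c) = 1 - c^2) by (rewrite Rmult_minus_distr_l, hls; ring).
    assert (c*c <= s*s). { destruct (Rle_dec (c*c) (s*s)); [assumption|]. nra. } destruct (Rle_dec (-c) s); [assumption|]. nra. }
  assert (hN : 0 < 2 * G * (l-1) * c * s - g * (1 + 2*(l-1)*c^2)).
  { assert (hX : 0 <= ((1-l)*(-c))*(s+c)) by (apply Rmult_le_pos; [apply Rmult_le_pos|]; lra).
    assert (h9 : 9/16 <= c^2) by nra.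
    assert (h1 : 0 <= (1 - 2*l) * (G+g) * c^2) by (apply Rmult_le_pos; [apply Rmult_le_pos|]; nra).
    assert (h2 : 0 <= (G+g)*(c^2 - 9/16)) by (apply Rmult_le_pos; lra).
    assert (h3 : 0 <= G * (((1-l)*(-c))*(s+c))) by (apply Rmult_le_pos; lra).
    nra. }
  assert (0 < l*s) by nra.
  apply Rdiv_lt_0_compat; assumption.
Qed.

Lemma PI_gt3 : 3 < PI.
Proof. pose proof PI2_3_2. lra. Qed.

Lemma sin_sq_le v : sin v ^ 2 <= v ^ 2.
Proof.
  destruct (Rtotal_order v 0) as [h|[h|h]].
  - destruct (Rle_dec (-v) PI).
    + pose proof (sin_lt_x (-v) ltac:(lra)). rewrite sin_neg in H.
      destruct (Req_dec (-v) PI) as [e|e].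
      * replace v with (-PI) by lra. rewrite sin_neg, sin_PI. nra.
      * pose proof (sin_gt_0 (-v) ltac:(lra) ltac:(lra)). rewrite sin_neg in H0. nra.
    + pose proof (SIN_bound v). pose proof PI_gt3. nra.
  - subst. rewrite sin_0. lra.
  - destruct (Rle_dec v PI).
    + pose proof (sin_lt_x v h).
      destruct (Req_dec v PI) as [e|e].
      * subst. rewrite sin_PI. nra.
      * pose proof (sin_gt_0 v h ltac:(lra)). nra.
    + pose proof (SIN_bound v). pose proof PI_gt3. nra.
Qed.

Lemma cos_34 u : Rabs u < 1/2 -> 3/4 <= cos u.
Proof.
  intros hu. replace u with (2 * (u/2)) by field. rewrite cos_2a_sin.
  pose proof (sin_sq_le (u/2)). apply Rabs_def2 in hu. nra.
Qed.

Lemma cos_lt1 e : 0 < e <= 1 -> cos e < 1.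
Proof.
  intros he. replace e with (2 * (e/2)) by field. rewrite cos_2a_sin.
  pose proof (sin_gt_0 (e/2) ltac:(lra) ltac:(pose proof PI_gt3; lra)). nra.
Qed.

Lemma cos_eq1 u : - (2*PI) < u < 2*PI -> cos u = 1 -> u = 0.
Proof.
  intros hu hc. replace u with (2 * (u/2)) in hc by field. rewrite cos_2a_sin in hc.
  assert (hs : sin (u/2) = 0) by nra.
  destruct (Rtotal_order u 0) as [h|[h|h]]; [|assumption|].
  - pose proof (sin_lt_0_var (u/2) ltac:(lra) ltac:(lra)). lra.
  - pose proof (sin_gt_0 (u/2) ltac:(lra) ltac:(lra)). lra.
Qed.

Definition t0 (w : R) := if Rle_dec 0 w then w else w + 2 * PI.
Definition t1 (w : R) := if Req_EM_T w PI then 0 else w + PI.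

Lemma t0_facts w : - PI <= w <= PI -> on_circle (t0 w) /\ (forall x, cos (x - w) = cos (x - t0 w))
  /\ cos (t0 w - w) = 1.
Proof.
  intros hw. pose proof PI_gt3. unfold t0, on_circle. destruct (Rle_dec 0 w).
  - split; [lra|]. split; [reflexivity|]. replace (w-w) with 0 by ring. apply cos_0.
  - split; [lra|]. split.
    + intros x. replace (x - w) with ((x - (w + 2*PI)) + 2 * INR 1 * PI) by (simpl; ring).
      apply cos_period.
    + replace (w + 2*PI - w) with (2*PI) by ring. apply cos_2PI.
Qed.

Lemma t1_facts w : - PI <= w <= PI -> on_circle (t1 w) /\ (forall x, cos (x - w) = - cos (x - t1 w)).
Proof.
  intros hw. pose proof PI_gt3. unfold t1, on_circle. destruct (Req_EM_T w PI).
  - split; [lra|]. intros x. subst. replace (x - 0) with x by ring.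
    rewrite cos_minus, cos_PI, sin_PI. ring.
  - split; [lra|]. intros x. replace (x - w) with ((x - (w + PI)) + PI) by ring.
    apply neg_cos.
Qed.

Lemma FF_lt g l c1 c2 : 0 < g -> 0 < l -> -1 <= c1 <= 1 -> -1 <= c2 <= 1 ->
  DD g l c2 < DD g l c1 -> FF g l c1 < FF g l c2.
Proof.
  intros hg hl h1 h2 hd. unfold FF.
  pose proof (DD_pos g l c2 hg hl h2). pose proof (sqrt_lt_R0 _ hl). pose proof PI_gt3.
  assert (0 < 2 * PI * sqrt l) by nra.
  apply Rmult_lt_compat_l; [lra|]. apply Rinv_lt_contravar.
  - apply Rmult_lt_0_compat; apply Rmult_lt_0_compat; nra.
  - apply Rmult_lt_compat_l; lra.
Qed.

Lemma cos_deriv w x : derivable_pt_lim (fun y => cos (y - w)) x (- sin (x - w)).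
Proof. apply is_derive_Reals. auto_derive; [exact I|]. unfold Rminus. ring. Qed.

Lemma unimodal_of g l w : 0 < g -> 0 < l -> - PI <= w <= PI ->
  (forall c1 c2, -1 <= c1 -> c1 < c2 -> c2 <= 1 -> FF g l c1 < FF g l c2) ->
  unimodal_circ (gcpc_density w g l).
Proof.
  intros hg hl hw hF.
  destruct (t0_facts w hw) as [hc0 [hcos hone]].
  assert (hle : forall c, -1 <= c <= 1 -> FF g l c <= FF g l 1).
  { intros c hc. destruct (Req_dec c 1). subst; lra. left. apply hF; lra. }
  exists (t0 w). split; [exact hc0|]. split.
  - exists 1. split; [lra|]. intros x _. rewrite !f_eq, hone. apply hle. apply COS_bound.
  - intros s hs [d [hd hmax]].
    assert (H1 : forall x, Rabs (x - s) < d -> cos (x - w) <= cos (s - w)).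
    { intros x hx. destruct (Rle_dec (cos (x - w)) (cos (s - w))) as [|n]; [assumption|].
      apply Rnot_le_lt in n. specialize (hmax x hx). rewrite !f_eq in hmax.
      pose proof (hF _ _ (proj1 (COS_bound (s - w))) n (proj2 (COS_bound (x - w)))). lra. }
    assert (hsin : sin (s - w) = 0).
    { pose (pr := exist (fun l0 => derivable_pt_lim (fun y => cos (y - w)) s l0) _ (cos_deriv w s)).
      assert (e := deriv_maximum (fun y => cos (y - w)) (s - d) (s + d) s pr
                   ltac:(lra) ltac:(lra)).
      assert (e' : derive_pt (fun y => cos (y - w)) s pr = 0).
      { apply e. intros x h1 h2. apply H1. apply Rabs_def1; lra. }
      rewrite (derive_pt_eq_0 _ _ _ pr (cos_deriv w s)) in e'. lra. }
    assert (hsq := sin2_cos2 (s - w)). unfold Rsqr in hsq. rewrite hsin in hsq.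
    assert (hcs : cos (s - w) = 1 \/ cos (s - w) = -1) by nra.
    destruct hcs as [hcs|hcs].
    + rewrite hcos in hcs. unfold on_circle in *. assert (t := cos_eq1 (s - t0 w) ltac:(lra) hcs). lra.
    + exfalso. set (e := Rmin (d/2) 1).
      assert (he : 0 < e <= 1 /\ e < d).
      { unfold e. pose proof (Rmin_l (d/2) 1). pose proof (Rmin_r (d/2) 1). pose proof (Rmin_pos (d/2) 1 ltac:(lra) ltac:(lra)). lra. }
      specialize (H1 (s + e) ltac:(rewrite Rabs_right; lra)).
      replace (s + e - w) with (e + (s - w)) in H1 by ring.
      rewrite cos_plus, hcs, hsin in H1. pose proof (cos_lt1 e ltac:(lra)). lra.
Qed.

Lemma FF_incr_uni g l : 0 < g -> 1/2 < l -> 0 < g^2 + 4*(g^2+1-l)*(l-1) ->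
  forall c1 c2, -1 <= c1 -> c1 < c2 -> c2 <= 1 -> FF g l c1 < FF g l c2.
Proof.
  intros hg hl hQ c1 c2 h1 h2 h3. apply FF_lt; try lra.
  apply D_decr; try lra. intros c hc. apply Dd_neg_uni; lra.
Qed.

Lemma partD g l w : 0 < g -> 0 < l -> l <= 1/2 -> - PI <= w <= PI ->
  exists t1 t2, on_circle t1 /\ on_circle t2 /\ t1 <> t2 /\
       is_local_max (gcpc_density w g l) t1 /\ is_local_max (gcpc_density w g l) t2.
Proof.
  intros hg hl hl2 hw.
  destruct (t0_facts w hw) as [hc0 [hcos hone]].
  destruct (t1_facts w hw) as [hc1 hcos1].
  assert (hm1 : cos (t1 w - w) = -1) by (rewrite hcos1; replace (t1 w - t1 w) with 0 by ring; rewrite cos_0; ring).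
  exists (t0 w), (t1 w). split; [assumption|]. split; [assumption|]. split.
  { intro e. rewrite e in hone. lra. }
  split.
  - exists (PI/2). split. { pose proof PI_gt3. lra. }
    intros x hx. rewrite !f_eq, hone, hcos.
    apply Rabs_def2 in hx.
    pose proof (cos_ge_0 (x - t0 w) ltac:(lra) ltac:(lra)).
    pose proof (COS_bound (x - t0 w)).
    destruct (Req_dec (cos (x - t0 w)) 1) as [e|e]. rewrite e; lra.
    left. apply FF_lt; try lra. apply D_decr; try lra.
    intros c hc. apply Dd_neg_D; lra.
  - exists (1/2). split; [lra|].
    intros x hx. rewrite !f_eq, hm1, hcos1.
    pose proof (cos_34 _ hx). pose proof (COS_bound (x - t1 w)).
    destruct (Req_dec (cos (x - t1 w)) 1) as [e|e]. rewrite e; right; f_equal; lra.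
    left. apply FF_lt; try lra. apply D_incr; try lra.
    intros c hc. apply Dd_pos_D; lra.
Qed.

Theorem mainTheorem8 (gamma lambda omega : R)
  (hg : 0 < gamma) (hl : 0 < lambda) (ho : - PI <= omega <= PI) :
  let f := gcpc_density omega gamma lambda in
  (lambda = 1 -> unimodal_circ f) /\
  (1 < lambda <= gamma ^ 2 + 1 -> unimodal_circ f) /\
  (lambda > gamma ^ 2 + 1 ->
     (gamma ^ 2 + 1) * (lambda - 1) > (lambda - gamma ^ 2 - 1) * (2 * lambda - 1) ^ 2 ->
     unimodal_circ f) /\
  (1 / 2 < lambda < 1 ->
     (gamma ^ 2 + 1 - lambda) * (1 - 2 * lambda) ^ 2 > (gamma ^ 2 + 1) * (1 - lambda) ->
     unimodal_circ f) /\
  (lambda <= 1 / 2 ->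
     exists t1 t2, on_circle t1 /\ on_circle t2 /\ t1 <> t2 /\
       is_local_max f t1 /\ is_local_max f t2).
Proof.
  intros f. unfold f.
  assert (U : 1/2 < lambda -> 0 < gamma^2 + 4*(gamma^2+1-lambda)*(lambda-1) ->
              unimodal_circ (gcpc_density omega gamma lambda)).
  { intros h1 h2. apply unimodal_of; try assumption. apply FF_incr_uni; assumption. }
  assert (hQ : lambda * (gamma^2 + 4*(gamma^2+1-lambda)*(lambda-1)) =
     (gamma ^ 2 + 1 - lambda) * (1 - 2 * lambda) ^ 2 - (gamma ^ 2 + 1) * (1 - lambda)) by ring.
  split; [|split; [|split; [|split]]].
  - intros e. apply U. lra. subst. nra.
  - intros e. apply U. lra. assert (0 <= (gamma^2+1-lambda)*(lambda-1)) by (apply Rmult_le_pos; lra). nra.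
  - intros e1 e2. apply U. nra.
    assert (0 < lambda * (gamma^2 + 4*(gamma^2+1-lambda)*(lambda-1))) by (rewrite hQ; nra).
    destruct (Rle_dec (gamma^2 + 4*(gamma^2+1-lambda)*(lambda-1)) 0); [|lra]. nra.
  - intros e1 e2. apply U. lra.
    assert (0 < lambda * (gamma^2 + 4*(gamma^2+1-lambda)*(lambda-1))) by (rewrite hQ; nra).
    destruct (Rle_dec (gamma^2 + 4*(gamma^2+1-lambda)*(lambda-1)) 0); [|lra]. nra.
  - intros e. apply partD; assumption.
Qed.
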